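(* Let $X=(X_n)_{n\in\mathbb{Z}}$ be a stationary sequence of integer-valued random variables and, for $n\in\mathbb{Z}$, let $\mathbb{Z}^R_X(n)$ be the connected component of $n$ in the record graph of $X$. Then $$\mathbb{P}[\mathbb{Z}^R_X(0)\text{ is finite}]=\mathbb{P}[\mathbb{Z}^R_X(n)\text{ is finite for all } n\ge1]=\mathbb{P}[\mathbb{Z}^R_X(n)\text{ is finite for all }n\le-1].$$
   Context: For a sequence $x=(x_n)_{n\in\mathbb{Z}}$, the record map is $R_x(i)=\inf\{n>i: \sum_{l=i}^{n-1}x_l\ge0\}$ if this set is nonempty, and $R_x(i)=i$ otherwise. The record graph has vertex set $\mathbb{Z}$ and a directed edge $i\to R_x(i)$ whenever $R_x(i)\ne i$; components are in the undirected sense. *)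

(* Defs.v *)
From HB Require Import structures.
From mathcomp Require Import all_boot all_order all_algebra.
From mathcomp Require Import all_classical all_reals.
From mathcomp Require Import measure probability.
From Stdlib Require Import Relations.
Set Implicit Arguments. Unset Strict Implicit. Unset Printing Implicit Defensive.
Import Order.TTheory GRing.Theory Num.Theory.
Local Open Scope ring_scope.
Local Open Scope classical_set_scope.

Definition psum (x : int -> int) (i : int) (k : nat) : int :=
  \sum_(0 <= l < k) x (i + l%:Z).

(* R_x(i) = inf { n > i : sum_{l=i}^{n-1} x_l >= 0 } if nonempty, else i.
   Writing n = i + k with k >= 1. *)
Definition record_map (x : int -> int) (i : int) : int :=
  match pselect (exists k : nat, `[< (0 < k)%N /\ 0 <= psum x i k >]) with
  | left h => i + (ex_minn h)%:Z
  | right _ => i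
  end.

Definition record_edge (x : int -> int) (i j : int) : Prop :=
  record_map x i = j /\ j <> i.

Definition record_component (x : int -> int) (n : int) : set int :=
  [set m | clos_refl_sym_trans int (record_edge x) n m].

(* stationarity of an integer-valued process: all finite-dimensional
   distributions are invariant under the shift by one *)
Definition stationary d (T : measurableType d) (R : realType)
  (P : probability T R) (X : int -> T -> int) : Prop :=
  forall s : seq (int * int),
    P [set w | forall p, p \in s -> X (p.1 + 1) w = p.2]
    = P [set w | forall p, p \in s -> X p.1 w = p.2].

(* Main.v *)
Require Import Defs.
From HB Require Import structures.
From mathcomp Require Import all_boot all_order all_algebra.
From mathcomp Require Import all_classical all_reals.
From mathcomp Require Import measure probability.
From mathcomp Require Import all_analysis.
From mathcomp Require Import zify.
From Stdlib Require Import Relations.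
Set Implicit Arguments. Unset Strict Implicit. Unset Printing Implicit Defensive.
Import Order.TTheory GRing.Theory Num.Theory.
Local Open Scope ring_scope.
Local Open Scope classical_set_scope.


Section Comb.
Variable x : int -> int.
Local Notation R := (record_map x).

Lemma psum0 i : psum x i 0 = 0.
Proof. by rewrite /psum big_geq. Qed.

Lemma psum_add i j k : psum x i (j + k) = psum x i j + psum x (i + j%:Z) k.
Proof.
rewrite /psum (big_cat_nat (n:=j)) ?leq_addr //=; congr (_ + _).
rewrite -{1}(add0n j) big_addn addKn; apply: eq_bigr => l _.
by rewrite PoszD addrA addrAC.
Qed.

Lemma rm_cases i :
  (R i = i /\ forall k, (0 < k)%N -> psum x i k < 0) \/
  (exists k0, R i = i + k0%:Z /\ (0 < k0)%N /\ 0 <= psum x i k0 /\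
     forall j, (0 < j)%N -> (j < k0)%N -> psum x i j < 0).
Proof.
rewrite /record_map; case: pselect => [h|h].
  right; case: ex_minnP => m /asboolP [m0 pm] Hmin; exists m; do 3!split => //.
  move=> j j0 jm; rewrite ltNge; apply/negP => pj.
  by have := Hmin j (asboolT (conj j0 pj)); rewrite leqNgt jm.
left; split => // k k0; rewrite ltNge; apply/negP => pk; apply: h.
by exists k; apply/asboolP.
Qed.

Lemma rm_ge i : i <= R i.
Proof. by case: (rm_cases i) => [[-> _]|[k [-> _]]] //; rewrite lerDl. Qed.

Lemma rm_le i k : (0 < k)%N -> 0 <= psum x i k ->
  exists k0, R i = i + k0%:Z /\ (0 < k0 <= k)%N.
Proof.
move=> k0 pk; case: (rm_cases i) => [[_ H]|[m [-> [m0 [pm Hm]]]]].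
  by have := H k k0; rewrite ltNge pk.
exists m; split => //; rewrite m0 /= leqNgt; apply/negP => km.
by have := Hm k k0 km; rewrite ltNge pk.
Qed.


Definition weakrec' i k := forall j, (j <= k)%N -> psum x i j <= psum x i k.

Lemma iter_wr q i : exists k, iter q R i = i + k%:Z /\ weakrec' i k.
Proof.
elim: q => [|q [k [Hq Hw]]].
  exists 0%N; split; first by rewrite addr0.
  by move=> j; rewrite leqn0 => /eqP->.
rewrite iterS Hq.
case: (rm_cases (i + k%:Z)) => [[-> _]|[k0 [-> [k00 [pk0 Hk0]]]]].
  by exists k.
exists (k + k0)%N; split; first by rewrite PoszD addrA.
have E := psum_add i k k0.
move=> j jk.
case: (leqP j k) => jk'.
  by apply: le_trans (Hw j jk') _; rewrite E lerDl.
case: (ltnP j (k+k0)) => jk2.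
  have -> : j = (k + (j - k))%N by rewrite subnKC // ltnW.
  rewrite psum_add E lerD2l; apply: ltW; apply: lt_le_trans (Hk0 _ _ _) pk0.
    by rewrite subn_gt0.
  by rewrite ltn_subLR // ltnW.
by have -> : j = (k+k0)%N by apply/eqP; rewrite eqn_leq jk jk2.
Qed.

Lemma wr_reach k : forall i, weakrec' i k -> exists q, iter q R i = i + k%:Z.
Proof.
elim/ltn_ind: k => k IH i Hw.
case: (posnP k) => [->|k0]; first by exists 0%N; rewrite addr0.
have pk : 0 <= psum x i k by have := Hw 0%N (leq0n _); rewrite psum0.
have [k1 [Ri /andP[k10 k1k]]] := rm_le k0 pk.
case: (ltngtP k1 k) => [k1k'|h|e]; last 2 first.
- by move: k1k; rewrite leqNgt h.
- by exists 1%N; rewrite /= Ri e.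
have W : weakrec' (i + k1%:Z) (k - k1).
  move=> j jk.
  have E1 := psum_add i k1 j; have E2 := psum_add i k1 (k - k1).
  rewrite (subnKC (ltnW k1k')) in E2.
  have := Hw (k1 + j)%N; rewrite -(leq_subRL _ (ltnW k1k')) => /(_ jk).
  rewrite E1 E2 lerD2l //.
have lt : (k - k1 < k)%N by lia.
have [q Hq] := IH (k - k1)%N lt _ W.
exists q.+1; rewrite iterSr Ri Hq -addrA -PoszD subnKC // ltnW //.
Qed.

Lemma iter_conn q i : clos_refl_sym_trans int (record_edge x) i (iter q R i).
Proof.
elim: q => [|q IH]; first exact: rst_refl.
rewrite iterS; apply: rst_trans IH _.
case: (eqVneq (R (iter q R i)) (iter q R i)) => [->|ne]; first exact: rst_refl.
by apply: rst_step; split => //; exact/eqP.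
Qed.

Lemma iter_ge q i : i <= iter q R i.
Proof. by elim: q => //= q IH; exact: le_trans IH (rm_ge _). Qed.

Lemma merge i n : forall j, (`|R i - j| <= n)%N -> i < j -> j < R i ->
  exists q, iter q R j = R i.
Proof.
elim: n => [|n IH] j Hn ij jR; first by lia.
case: (rm_cases i) => [[Ri _]|[k0 [Ri [k00 [pk0 Hk0]]]]]; first by lia.
have [t Et] : exists t : nat, j = i + t%:Z by exists `|j - i|%N; lia.
have t0 : (0 < t)%N by lia.
have tk : (t < k0)%N by lia.
have ps : 0 <= psum x j (k0 - t).
  have := psum_add i t (k0 - t); rewrite (subnKC (ltnW tk)) -Et => E.
  have := Hk0 t t0 tk; lia.
have kt : (0 < k0 - t)%N by rewrite subn_gt0.
have [k1 [Rj /andP[k10 k1k]]] := rm_le kt ps.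
case: (ltngtP k1 (k0 - t)) => [k1k'|h|e]; last 2 first.
- by move: k1k; rewrite leqNgt h.
- by exists 1%N; rewrite /= Rj Ri Et e; lia.
have h1 : (`|R i - R j| <= n)%N by lia.
have h2 : i < R j by lia.
have h3 : R j < R i by lia.
have [q Hq] := IH (R j) h1 h2 h3.
by exists q.+1; rewrite iterSr.
Qed.

Lemma interval p : forall a b, a <= b -> b <= iter p R a ->
  clos_refl_sym_trans int (record_edge x) a b.
Proof.
elim: p => [|p IH] a b ab bp.
  have -> : b = a by apply/eqP; rewrite eq_le bp ab.
  exact: rst_refl.
rewrite iterSr in bp.
have CR : clos_refl_sym_trans int (record_edge x) a (R a) by exact: (iter_conn 1).
case: (leP (R a) b) => Rb; first exact: rst_trans CR (IH _ _ Rb bp).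
case: (eqVneq a b) => [->|ne]; first exact: rst_refl.
have ab' : a < b by rewrite lt_neqAle ne ab.
have [q Eq] := merge (n := `|R a - b|%N) (leqnn _) ab' Rb.
apply: rst_trans CR _; apply: rst_sym; rewrite -Eq; exact: iter_conn.
Qed.

Lemma meet a b : clos_refl_sym_trans int (record_edge x) a b ->
  exists p q, iter p R a = iter q R b.
Proof.
elim => {a b}.
- by move=> a b [E _]; exists 1%N, 0%N.
- by move=> a; exists 0%N, 0%N.
- by move=> a b _ [p [q E]]; exists q, p.
- move=> a b c _ [p [q E1]] _ [r [s E2]]; exists (r + p)%N, (q + s)%N.
  by rewrite iterD E1 -iterD [(r + q)%N]addnC iterD E2 -iterD.
Qed.


Definition Up n := forall K : nat, exists k : nat, (K <= k)%N /\ weakrec' n k.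
Definition Lo n := forall M : nat, exists M' k : nat,
  (M <= M')%N /\ (M' <= k)%N /\ weakrec' (n - M'%:Z) k.

Lemma up_iff n :
  (forall K : int, exists m, K <= m /\ record_component x n m) <-> Up n.
Proof.
split.
- move=> H K; have [m [Km Cm]] := H (n + K%:Z).
  have [p [q E]] := meet Cm; have [k [Ek Wk]] := iter_wr p n.
  exists k; split => //; have := iter_ge q m; rewrite -E Ek; lia.
- move=> H K; have [k [Kk Wk]] := H `|K - n|%N.
  have [q Eq] := wr_reach Wk; exists (n + k%:Z); split; first lia.
  rewrite /record_component /= -Eq; exact: iter_conn.
Qed.

Lemma lo_iff n :
  (forall K : int, exists m, m <= K /\ record_component x n m) <-> Lo n.
Proof.
split.
- move=> H M; have [m [mK Cm]] := H (n - M%:Z).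
  have [p [q E]] := meet Cm; have [k [Ek Wk]] := iter_wr q m.
  have ge := iter_ge p n; rewrite E Ek in ge.
  exists `|n - m|%N, k; split; first lia; split; first lia.
  by have -> : n - (`|n - m|%N)%:Z = m by lia.
- move=> H K; have [M' [k [h1 [h2 Wk]]]] := H `|n - K|%N.
  exists (n - M'%:Z); split; first lia.
  have [q Eq] := wr_reach Wk; apply: rst_sym; apply: (@interval q); first lia.
  rewrite Eq; lia.
Qed.

Lemma finite_bounded (A : set int) :
  finite_set A <-> exists a b, forall m, A m -> a <= m <= b.
Proof.
split.
- move=> /finite_seqP [s ->].
  elim: s => [|y s [a [b IH]]]; first by exists 0, 0.
  exists (Num.min a y), (Num.max b y) => m /=; rewrite inE => /orP [/eqP->|ms].
    by rewrite ge_min le_max lexx !orbT.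
  have /andP[am mb] := IH m ms.
  by rewrite ge_min le_max am mb.
- move=> [a [b H]].
  apply: (@sub_finite_set _ _ ((fun i : nat => a + i%:Z) @` `I_(`|b - a|.+1)%N)).
    move=> m Am; have /andP[am mb] := H m Am.
    exists `|m - a|%N; first by rewrite /= ltnS; lia.
    lia.
  by apply: finite_image; exact: finite_II.
Qed.

Lemma comp_finite n : finite_set (record_component x n) <-> ~ Up n /\ ~ Lo n.
Proof.
rewrite finite_bounded; split.
- move=> [a [b Hb]]; split.
    move=> /up_iff H; have [m [bm Cm]] := H (b + 1); have := Hb m Cm; lia.
  move=> /lo_iff H; have [m [bm Cm]] := H (a - 1); have := Hb m Cm; lia.
- move=> [nU nL].
  have [K HK] : exists K, ~ exists m, K <= m /\ record_component x n m.
    by apply/existsNP => H; apply: nU; apply/up_iff.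
  have [K' HK'] : exists K, ~ exists m, m <= K /\ record_component x n m.
    by apply/existsNP => H; apply: nL; apply/lo_iff.
  exists K', K => m Cm; apply/andP; split.
    by rewrite leNgt; apply/negP => h; apply: HK'; exists m; split => //; lia.
  by rewrite leNgt; apply/negP => h; apply: HK; exists m; split => //; lia.
Qed.

End Comb.

Lemma psum_ext (x y : int -> int) i j :
  (forall l, (l < j)%N -> x (i + l%:Z) = y (i + l%:Z)) -> psum x i j = psum y i j.
Proof.
by move=> H; rewrite /psum; apply: eq_big_nat => l /andP[_ lj]; rewrite H.
Qed.

Lemma psum_shift (x : int -> int) i j :
  psum (fun l => x (l + 1)) i j = psum x (i + 1) j.
Proof. by rewrite /psum; apply: eq_bigr => l _; rewrite addrAC. Qed.

Lemma wr_shift (x : int -> int) i k :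
  weakrec' (fun l => x (l + 1)) i k <-> weakrec' x (i + 1) k.
Proof. by split => H j jk; have := H j jk; rewrite !psum_shift. Qed.

Lemma up_shift (x : int -> int) n : Up (fun l => x (l + 1)) n <-> Up x (n + 1).
Proof.
split => H K; have [k [Kk W]] := H K; exists k; split => //; exact/wr_shift.
Qed.

Lemma lo_shift (x : int -> int) n : Lo (fun l => x (l + 1)) n <-> Lo x (n + 1).
Proof.
split => H M; have [M' [k [h1 [h2 W]]]] := H M; exists M', k; do 2!split => //.
  by move/wr_shift: W; rewrite addrAC.
by apply/wr_shift; rewrite addrAC.
Qed.

Lemma up_mono (x : int -> int) n : Up x n -> Up x (n + 1).
Proof.
move=> H K; have [[|k] [Kk W]] := H K.+1; first lia.
exists k; split; first lia.
move=> j jk; have := W (1 + j)%N; rewrite add1n ltnS => /(_ jk).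
have := psum_add x n 1 j; have := psum_add x n 1 k; rewrite !add1n => -> ->.
by rewrite lerD2l.
Qed.

Lemma lo_mono (x : int -> int) n : Lo x (n + 1) -> Lo x n.
Proof.
move=> H M; have [M' [k [h1 [h2 W]]]] := H M.+1; exists M'.-1, k.
split; first lia; split; first lia.
by have -> : n - (M'.-1)%:Z = n + 1 - M'%:Z by lia.
Qed.

Section Prob.
Variables (d : measure_display) (T : measurableType d) (R : realType)
  (P : probability T R) (X : int -> T -> int).
Hypothesis HX : forall (n k : int), measurable (X n @^-1` [set k]).
Hypothesis Hstat : stationary P X.

Definition XS : int -> T -> int := fun l w => X (l + 1) w.

Lemma HXS : forall (n k : int), measurable (XS n @^-1` [set k]).
Proof. by move=> n k; exact: HX. Qed.

Definition Ev (Y : int -> T -> int) (Phi : (int -> int) -> Prop) :=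
  [set w | Phi (fun l => Y l w)].

Definition good Phi := measurable (Ev X Phi) /\ measurable (Ev XS Phi) /\
  P (Ev X Phi) = P (Ev XS Phi).

Lemma good_ext Phi Phi' : (forall x, Phi x <-> Phi' x) -> good Phi -> good Phi'.
Proof.
by move=> H; have -> : Phi' = Phi by apply/funext => x; apply/propext; split => /H.
Qed.

Section FD.
Variables (a : int) (K : nat) (Phi : (int -> int) -> Prop).
Hypothesis HPhi : forall x y : int -> int,
  (forall i, (i < K)%N -> x (a + i%:Z) = y (a + i%:Z)) -> Phi x -> Phi y.

Definition Cyl (Y : int -> T -> int) (s : seq int) :=
  \bigcap_i (if (i < K)%N then Y (a + i%:Z) @^-1` [set nth 0 s i] else setT).
Definition ext (s : seq int) := fun l : int => nth 0 s `|l - a|%N.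
Definition Cnd (s : seq int) := `[< Phi (ext s) /\ size s = K >].
Definition Fam (Y : int -> T -> int) n :=
  if pickle_inv n is Some s then (if Cnd s then Cyl Y s else set0) else set0.

Lemma cylP Y s w :
  Cyl Y s w <-> forall i, (i < K)%N -> Y (a + i%:Z) w = nth 0 s i.
Proof.
split.
  by move=> H i iK; have := H i I; rewrite iK.
by move=> H i _; case: ifP => // iK; exact: H.
Qed.

Lemma ext_nth s i : ext s (a + i%:Z) = nth 0 s i.
Proof. by rewrite /ext (_ : a + i%:Z - a = i%:Z) ?absz_nat // addrAC subrr add0r. Qed.

Lemma Fam_cover Y : Ev Y Phi = \bigcup_n Fam Y n.
Proof.
apply/seteqP; split => w /=.
- move=> Hw; set s := mkseq (fun i => Y (a + i%:Z) w) K.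
  exists (pickle s) => //; rewrite /Fam pickleK_inv.
  have Cs : Cnd s.
    apply/asboolP; split; last by rewrite size_mkseq.
    by apply: HPhi Hw => i iK; rewrite ext_nth nth_mkseq.
  by rewrite Cs; apply/cylP => i iK; rewrite nth_mkseq.
- move=> [n _]; rewrite /Fam; case: pickle_inv => [s|] //.
  case: ifP => // /asboolP [Hs sz] /cylP Hc.
  by apply: HPhi Hs => i iK; rewrite ext_nth Hc.
Qed.

Lemma Fam_triv Y : trivIset setT (Fam Y).
Proof.
move=> n m _ _ [w [Hn Hm]]; move: Hn Hm.
have := @pickle_invK (seq int) n; have := @pickle_invK (seq int) m; rewrite /Fam.
case: (pickle_inv n) => [s|] //; case: (pickle_inv m) => [s'|] //= Em En.
case: ifP => // /asboolP [_ sz]; case: ifP => // /asboolP [_ sz'] /cylP H1 /cylP H2.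
have ss : s = s'.
  apply: (@eq_from_nth _ 0); first by rewrite sz sz'.
  by move=> i; rewrite sz => iK; rewrite -H1 // -H2.
by rewrite -En -Em ss.
Qed.

Lemma Fam_meas Y : (forall (n k : int), measurable (Y n @^-1` [set k])) ->
  forall n, measurable (Fam Y n).
Proof.
move=> HY n; rewrite /Fam; case: pickle_inv => [s|]; last exact: measurable0.
case: ifP => _; last exact: measurable0.
apply: bigcapT_measurable => i; case: ifP => _; [exact: HY | exact: measurableT].
Qed.

Lemma Fam_eq n : P (Fam X n) = P (Fam XS n).
Proof.
rewrite /Fam; case: pickle_inv => [s|] //; case: ifP => _ //.
pose L := [seq (a + i%:Z, nth 0 s i) | i <- iota 0 K].
have -> : Cyl X s = [set w | forall p, p \in L -> X p.1 w = p.2].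
  apply/seteqP; split => w /=.
    move=> /cylP H p /mapP [i]; rewrite mem_iota add0n => /andP[_ iK] -> /=.
    exact: H.
  move=> H; apply/cylP => i iK; apply: (H (a + i%:Z, nth 0 s i)).
  by apply/mapP; exists i => //; rewrite mem_iota add0n iK.
have -> : Cyl XS s = [set w | forall p, p \in L -> X (p.1 + 1) w = p.2].
  apply/seteqP; split => w /=.
    move=> /cylP H p /mapP [i]; rewrite mem_iota add0n => /andP[_ iK] -> /=.
    exact: H.
  move=> H; apply/cylP => i iK; apply: (H (a + i%:Z, nth 0 s i)).
  by apply/mapP; exists i => //; rewrite mem_iota add0n iK.
by rewrite Hstat.
Qed.

Lemma fdim_good : good Phi.
Proof.
split; first by rewrite Fam_cover; apply: bigcupT_measurable; exact: Fam_meas.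
split; first by rewrite Fam_cover; apply: bigcupT_measurable; apply: Fam_meas; exact: HXS.
rewrite !Fam_cover (measure_bigcup P setT (Fam X)) ?(measure_bigcup P setT (Fam XS)).
- by apply: eq_eseriesr => n _; exact: Fam_eq.
- by move=> n _; apply: Fam_meas; exact: HXS.
- exact: Fam_triv.
- by move=> n _; apply: Fam_meas.
- exact: Fam_triv.
Qed.

End FD.


Lemma good_union (Phi : nat -> (int -> int) -> Prop) :
  (forall k, good (Phi k)) -> (forall k x, Phi k x -> Phi k.+1 x) ->
  good (fun x => exists k, Phi k x).
Proof.
move=> G M.
have E Y : Ev Y (fun x => exists k, Phi k x) = \bigcup_k Ev Y (Phi k).
  by apply/seteqP; split => w /= [k]; [exists k | move=> _ h; exists k].
have nd Y : nondecreasing_seq (fun k => Ev Y (Phi k)).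
  by apply/nondecreasing_seqP => k; rewrite subsetEset => w; exact: M.
have mX k : measurable (Ev X (Phi k)) := (G k).1.
have mXS k : measurable (Ev XS (Phi k)) := (G k).2.1.
have mbX : measurable (\bigcup_k Ev X (Phi k)) by exact: bigcupT_measurable.
have mbXS : measurable (\bigcup_k Ev XS (Phi k)) by exact: bigcupT_measurable.
rewrite /good !E; split => //; split => //.
have c1 := nondecreasing_cvg_mu (mu:=P) mX mbX (nd X).
have c2 := nondecreasing_cvg_mu (mu:=P) mXS mbXS (nd XS).
have eqf : P \o (fun k => Ev X (Phi k)) = P \o (fun k => Ev XS (Phi k)).
  by apply/funext => k; exact: (G k).2.2.
rewrite eqf in c1.
exact: (cvg_unique (@ereal_hausdorff R) c1 c2).
Qed.

Lemma good_inter (Phi : nat -> (int -> int) -> Prop) :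
  (forall k, good (Phi k)) -> (forall k x, Phi k.+1 x -> Phi k x) ->
  good (fun x => forall k, Phi k x).
Proof.
move=> G M.
have E Y : Ev Y (fun x => forall k, Phi k x) = \bigcap_k Ev Y (Phi k).
  by apply/seteqP; split => w /= H k; [move=> _; exact: H | exact: H k I].
have ni Y : nonincreasing_seq (fun k => Ev Y (Phi k)).
  by apply/nonincreasing_seqP => k; rewrite subsetEset => w; exact: M.
have mX k : measurable (Ev X (Phi k)) := (G k).1.
have mXS k : measurable (Ev XS (Phi k)) := (G k).2.1.
have mbX : measurable (\bigcap_k Ev X (Phi k)) by exact: bigcapT_measurable.
have mbXS : measurable (\bigcap_k Ev XS (Phi k)) by exact: bigcapT_measurable.
rewrite /good !E; split => //; split => //.
have fin Y (mY : forall k, measurable (Ev Y (Phi k))) :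
    (P (Ev Y (Phi 0%N)) < +oo)%E.
  by apply: (le_lt_trans (probability_le1 P (mY 0%N))); rewrite ltry.
have c1 := nonincreasing_cvg_mu (mu:=P) (fin _ mX) mX mbX (ni X).
have c2 := nonincreasing_cvg_mu (mu:=P) (fin _ mXS) mXS mbXS (ni XS).
have eqf : P \o (fun k => Ev X (Phi k)) = P \o (fun k => Ev XS (Phi k)).
  by apply/funext => k; exact: (G k).2.2.
rewrite eqf in c1.
exact: (cvg_unique (@ereal_hausdorff R) c1 c2).
Qed.


Lemma good_up n : good (fun x => Up x n).
Proof.
apply: (@good_ext (fun x => forall K : nat, exists L : nat, exists k : nat,
    (K <= k <= L)%N /\ weakrec' x n k)).
  move=> x; split.
    by move=> H K; have [L [k [/andP[Kk _] W]]] := H K; exists k.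
  by move=> H K; have [k [Kk W]] := H K; exists k, k; rewrite Kk leqnn.
apply: good_inter => [K|K x [L [k [/andP[Kk kL] W]]]]; last first.
  by exists L, k; rewrite kL (ltnW Kk).
apply: good_union => [L|L x [k [/andP[Kk kL] W]]]; last first.
  by exists k; rewrite Kk (leq_trans kL).
apply: (@fdim_good n L) => x y H [k [/andP[Kk kL] W]].
exists k; split; first by rewrite Kk kL.
have E j : (j <= L)%N -> psum y n j = psum x n j.
  by move=> jL; symmetry; apply: psum_ext => l lj; apply: H; exact: leq_trans lj jL.
move=> j jk; rewrite !E //; [exact: W | exact: leq_trans jk kL].
Qed.

Lemma good_lo n : good (fun x => Lo x n).
Proof.
apply: (@good_ext (fun x => forall M : nat, exists L : nat, exists M' k : nat,
    [/\ (M <= M')%N, (M' <= k)%N, (k <= L)%N & weakrec' x (n - M'%:Z) k])).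
  move=> x; split.
    by move=> H M; have [L [M' [k [h1 h2 _ W]]]] := H M; exists M', k.
  by move=> H M; have [M' [k [h1 [h2 W]]]] := H M; exists k, M', k.
apply: good_inter => [M|M x [L [M' [k [h1 h2 h3 W]]]]]; last first.
  by exists L, M', k; split => //; exact: ltnW.
apply: good_union => [L|L x [M' [k [h1 h2 h3 W]]]]; last first.
  by exists M', k; split => //; exact: leqW.
apply: (@fdim_good (n - L%:Z) (L + L)) => x y H [M' [k [h1 h2 h3 W]]].
exists M', k; split => //.
have E j : (j <= L)%N -> psum y (n - M'%:Z) j = psum x (n - M'%:Z) j.
  move=> jL; symmetry; apply: psum_ext => l lj.
  have := H (L - M' + l)%N; rewrite (_ : n - L%:Z + (L - M' + l)%N%:Z =
     n - M'%:Z + l%:Z); first by apply; lia.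
  lia.
move=> j jk; have jL : (j <= L)%N by lia.
have kL : (k <= L)%N by lia.
by rewrite !E //; exact: W.
Qed.

Definition uset n := Ev X (fun x => Up x n).
Definition lset n := Ev X (fun x => Lo x n).

Lemma uset_meas n : measurable (uset n).
Proof. exact: (good_up n).1. Qed.
Lemma lset_meas n : measurable (lset n).
Proof. exact: (good_lo n).1. Qed.

Lemma uset_eq n : P (uset n) = P (uset (n + 1)).
Proof.
rewrite /uset (good_up n).2.2; congr (P _).
by apply/seteqP; split => w; rewrite /Ev /XS /= => /(up_shift (fun l => X l w)).
Qed.

Lemma lset_eq n : P (lset n) = P (lset (n + 1)).
Proof.
rewrite /lset (good_lo n).2.2; congr (P _).
by apply/seteqP; split => w; rewrite /Ev /XS /= => /(lo_shift (fun l => X l w)).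
Qed.

Lemma uset_mono n : uset n `<=` uset (n + 1).
Proof. by move=> w; exact: up_mono. Qed.
Lemma lset_mono n : lset (n + 1) `<=` lset n.
Proof. by move=> w; exact: lo_mono. Qed.

End Prob.

Section Abs.
Variables (d : measure_display) (T : measurableType d) (R : realType)
  (P : probability T R).

Lemma fin_lt (A : set T) : measurable A -> (P A < +oo)%E.
Proof. by move=> mA; apply: (le_lt_trans (probability_le1 P mA)); rewrite ltry. Qed.

Lemma null_sub (A N : set T) : measurable A -> measurable N -> P N = 0%E ->
  A `<=` N -> P A = 0%E.
Proof.
move=> mA mN PN AN; apply/eqP; rewrite eq_le measure_ge0 andbT -PN.
exact: le_measure (mem_set mA) (mem_set mN) AN.
Qed.

Lemma eq_ae (A B N1 N2 : set T) : measurable A -> measurable B ->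
  measurable N1 -> measurable N2 -> P N1 = 0%E -> P N2 = 0%E ->
  A `\` B `<=` N1 -> B `\` A `<=` N2 -> P A = P B.
Proof.
move=> mA mB m1 m2 P1 P2 s1 s2.
rewrite (measureDI P mA mB) (measureDI P mB mA); congr (adde _ _); last by rewrite setIC.
transitivity (0 : \bar R); first exact: (null_sub (measurableD mA mB) m1 P1 s1).
by symmetry; exact: (null_sub (measurableD mB mA) m2 P2 s2).
Qed.

Lemma null_diff (A B : set T) : measurable A -> measurable B -> B `<=` A ->
  P A = P B -> P (A `\` B) = 0%E.
Proof.
move=> mA mB BA E.
have h : (P A - P B = 0)%E.
  by rewrite E subee // ge0_fin_numE ?measure_ge0 // fin_lt.
rewrite measureD // ?fin_lt // (setIidr BA); exact: h.
Qed.

Lemma abstr_lem (u l : int -> set T) :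
  (forall n, measurable (u n)) -> (forall n, measurable (l n)) ->
  (forall n, u n `<=` u (n + 1)) -> (forall n, l (n + 1) `<=` l n) ->
  (forall n, P (u n) = P (u (n + 1))) -> (forall n, P (l n) = P (l (n + 1))) ->
  P [set w | ~ u 0 w /\ ~ l 0 w] =
  P [set w | forall n : int, 1 <= n -> ~ u n w /\ ~ l n w].
Proof.
move=> mu ml um lm ue le.
set A := [set w | _]; set B := [set w | _].
have mA : measurable A.
  have -> : A = ~` (u 0 `|` l 0).
    by apply/seteqP; split => w /=; [move=> [h1 h2] [] | move=> h; split => ?; apply: h; [left|right]].
  by apply: measurableC; apply: measurableU.
have mB : measurable B.
  have -> : B = \bigcap_j ~` (u (j%:Z + 1) `|` l (j%:Z + 1)).
    apply/seteqP; split => w /=.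
      by move=> H j _ /=; have [h1 h2] := H (j%:Z + 1) ltac:(lia); case.
    move=> H n n1; have [j ->] : exists j : nat, n = j%:Z + 1.
      by exists (`|n|.-1)%N; lia.
    by have /= h := H j I; split => ?; apply: h; [left|right].
  by apply: bigcapT_measurable => j; apply: measurableC; apply: measurableU.
pose D j := u (j%:Z + 1) `\` u j%:Z.
have mD j : measurable (D j) by apply: measurableD.
have PD j : P (D j) = 0%E by apply: null_diff => //; rewrite -ue.
have mN1 : measurable (\bigcup_j D j) by exact: bigcupT_measurable.
have N1 : P (\bigcup_j D j) = 0%E.
  apply/(negligibleP P mN1); apply: negligible_bigcup => j.
  by apply/(negligibleP P (mD j)); exact: PD.
have mN2 : measurable (l 0 `\` l (0 + 1)) by apply: measurableD.
have N2 : P (l 0 `\` l (0 + 1)) = 0%E by apply: null_diff => //; rewrite -le.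
have lmon : forall k : nat, l k%:Z `<=` l 0.
  elim => [|k IH] //; apply: subset_trans IH.
  by have := lm k%:Z; rewrite (_ : (k.+1)%:Z = k%:Z + 1) //; lia.
apply: (eq_ae mA mB mN1 mN2 N1 N2).
- move=> w [[nu0 nl0] nB].
  have [n [n1 H]] : exists n, 1 <= n /\ (u n w \/ l n w).
    apply: contrapT => H'; apply: nB => n n1; split => h; apply: H';
      exists n; split => //; [left|right]; exact: h.
  have [k Ek] : exists k : nat, n = k%:Z by exists `|n|%N; lia.
  rewrite Ek in H; clear n1 Ek.
  case: H => [H|H]; last by exfalso; apply: nl0; exact: lmon H.
  elim: k H => [//|k IH] H.
  have [uk|nuk] := pselect (u k%:Z w); first exact: IH.
  by exists k => //; split => //; rewrite (_ : k%:Z + 1 = k.+1%:Z) //; lia.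
- move=> w [HB nA]; have [h1 h2] := HB 1 (lexx _).
  have [u0|nu0] := pselect (u 0 w).
    by exfalso; apply: h1; have := um 0 w u0; rewrite add0r.
  have [l0|nl0] := pselect (l 0 w); last by exfalso; apply: nA.
  by split => //; rewrite add0r.
Qed.

End Abs.

Theorem lemma3p3 (d : measure_display) (T : measurableType d) (R : realType)
  (P : probability T R) (X : int -> T -> int)
  (HX : forall (n k : int), measurable (X n @^-1` [set k]))
  (Hstat : stationary P X) :
  P [set w | finite_set (record_component (fun l => X l w) 0)]
    = P [set w | forall n : int, 1 <= n ->
                   finite_set (record_component (fun l => X l w) n)]
  /\
  P [set w | finite_set (record_component (fun l => X l w) 0)]
    = P [set w | forall n : int, n <= -1 ->
                   finite_set (record_component (fun l => X l w) n)].
Proof.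
have mu n := uset_meas (P:=P) HX Hstat n.
have ml n := lset_meas (P:=P) HX Hstat n.
have um n : uset X n `<=` uset X (n + 1) := @uset_mono _ _ X n.
have lm n : lset X (n + 1) `<=` lset X n := @lset_mono _ _ X n.
have ue n := uset_eq HX Hstat n.
have le n := lset_eq HX Hstat n.
have F0 : [set w | finite_set (record_component (fun l => X l w) 0)] =
          [set w | ~ uset X 0 w /\ ~ lset X 0 w].
  by apply/seteqP; split => w /=; [move/comp_finite | move=> h; apply/comp_finite].
rewrite F0; split.
  have -> : [set w | forall n : int, 1 <= n ->
                   finite_set (record_component (fun l => X l w) n)] =
            [set w | forall n : int, 1 <= n -> ~ uset X n w /\ ~ lset X n w].
    apply/seteqP; split => w /= H n n1; have := H n n1.
      by move/comp_finite.
    by move=> h; apply/comp_finite.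
  exact: abstr_lem.
have -> : [set w | forall n : int, n <= -1 ->
                 finite_set (record_component (fun l => X l w) n)] =
          [set w | forall n : int, 1 <= n -> ~ lset X (- n) w /\ ~ uset X (- n) w].
  apply/seteqP; split => w /= H n n1.
    have := H (- n); rewrite lerN2 => /(_ n1) /comp_finite [h1 h2]; by split.
  have := H (- n); rewrite lerNr => /(_ n1); rewrite opprK => -[h1 h2].
  by apply/comp_finite.
have -> : [set w | ~ uset X 0 w /\ ~ lset X 0 w] =
          [set w | ~ lset X (- 0) w /\ ~ uset X (- 0) w].
  by rewrite oppr0; apply/seteqP; split => w /= [h1 h2].
apply: (@abstr_lem _ _ _ P (fun n => lset X (- n)) (fun n => uset X (- n))).
- by move=> n; exact: ml.
- by move=> n; exact: mu.
- by move=> n; have := lm (- (n + 1)); rewrite opprD subrK.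
- by move=> n; have := um (- (n + 1)); rewrite opprD subrK.
- by move=> n; have := le (- (n + 1)); rewrite opprD subrK.
- by move=> n; have := ue (- (n + 1)); rewrite opprD subrK.
Qed.
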